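(* Let $\mathcal C$ be a hyper-extensive category and $H\colon\mathcal C\to\mathcal C$ a functor preserving countable coproducts and having a terminal coalgebra $t\colon\nu H\to H(\nu H)$. Then the following four categories are isomorphic: (1) the Eilenberg–Moore category $\mathcal C^{\mathbb T}$ of the free-cia monad $\mathbb T$; (2) the slice category $\nu H/\mathrm{Alg}\,H$; (3) the category of Bloom algebras for $H$; (4) the category of complete Elgot algebras for $H$.
   Context: Hyper-extensive category: countable coproducts that are universal (pullbacks along arbitrary morphisms exist and preserve them), disjoint (injections monic, pairwise pullbacks initial), and coherent (a countable family of pairwise disjoint coproduct injections has copairing a coproduct injection). $\mathrm{Alg}\,H$ is the category of $H$-algebras; $(\nu H,t^{-1})$ is an $H$-algebra. An $H$-algebra $a\colon HA\to A$ is a cia if every $e\colon X\to HX+A$ has a unique solution, i.e. $s$ with $s=[a,\mathrm{id}_A]\cdot(Hs+\mathrm{id}_A)\cdot e$. Under the hypotheses, for every $Y$ a free cia $TY$ on $Y$ exists (with universal map $\eta_Y$); $\mathbb T$ is the resulting monad with unit $\eta$ and multiplication $\mu_Y\colon TTY\to TY$ the unique $H$-algebra morphism extending $\mathrm{id}_{TY}$. The slice $\nu H/\mathrm{Alg}\,H$ has objects $H$-algebra morphisms $(\nu H,t^{-1})\to(A,a)$ and morphisms commuting triangles of algebra morphisms. For $e\colon X\to HX+Y$ and $h\colon Y\to Z$ write $h\bullet e=(HX+h)\cdot e$. A complete Elgot algebra is $(A,a,\dagger)$ with $a\colon HA\to A$ and $\dagger$ assigning to each $e\colon X\to HX+A$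 a solution $e^\dagger\colon X\to A$ such that (Functoriality) if $e\colon X\to HX+A$, $f\colon Y\to HY+A$ and $h\colon X\to Y$ satisfy $f\cdot h=(Hh+A)\cdot e$, then $f^\dagger\cdot h=e^\dagger$; (Compositionality) for $e\colon X\to HX+Y$ and $f\colon Y\to HY+A$, with $e\oplus f=(\mathrm{can}+A)\cdot(HX+f)\cdot[e,\mathrm{inr}]\colon X+Y\to H(X+Y)+A$ where $\mathrm{can}=[H\mathrm{inl},H\mathrm{inr}]\colon HX+HY\to H(X+Y)$, one has $(e\oplus f)^\dagger\cdot\mathrm{inl}=(f^\dagger\bullet e)^\dagger$. Morphisms $(A,a,\dagger)\to(B,b,\ddagger)$ of complete Elgot algebras are $h\colon A\to B$ with $h\cdot e^\dagger=(h\bullet e)^\ddagger$ for all $e\colon X\to HX+A$. A Bloom algebra is $(A,a,\dagger)$ with $a\colon HA\to A$ and $\dagger$ assigning to each coalgebra $e\colon X\to HX$ a morphism $e^\dagger\colon X\to A$ with $e^\dagger=a\cdot He^\dagger\cdot e$, such that for every coalgebra morphism $h\colon(X,e)\to(Y,f)$ one has $f^\dagger\cdot h=e^\dagger$. Morphisms of Bloom algebras are $H$-algebra morphisms $h$ with $h\cdot e^\dagger=e^\ddagger$ for all coalgebras $e$. *)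

(* Defs.v *)
Record Category : Type := {
  Ob : Type;
  Hom : Ob -> Ob -> Type;
  idm : forall a, Hom a a;
  comp : forall a b c, Hom b c -> Hom a b -> Hom a c }.
Arguments Hom {_} _ _.
Arguments idm {_} _.
Arguments comp {_ _ _ _} _ _.
Notation "g ∘ f" := (comp g f) (at level 40, left associativity).

Definition IsCategory (C : Category) : Prop :=
  (forall (a b : Ob C) (f : Hom a b), idm b ∘ f = f) /\
  (forall (a b : Ob C) (f : Hom a b), f ∘ idm a = f) /\
  (forall (a b c d : Ob C) (f : Hom a b) (g : Hom b c) (h : Hom c d),
      h ∘ (g ∘ f) = (h ∘ g) ∘ f).

Record Functor (C D : Category) : Type := {
  fobj : Ob C -> Ob D;
  fmor : forall a b, Hom a b -> Hom (fobj a) (fobj b) }.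
Arguments fobj {C D} _ _.
Arguments fmor {C D} _ {a b} _.

Definition IsFunctor {C D : Category} (F : Functor C D) : Prop :=
  (forall a, fmor F (idm a) = idm (fobj F a)) /\
  (forall (a b c : Ob C) (f : Hom a b) (g : Hom b c),
      fmor F (g ∘ f) = fmor F g ∘ fmor F f).

Record BinCoprod (C : Category) : Type := {
  cp : Ob C -> Ob C -> Ob C;
  cinl : forall A B, Hom A (cp A B);
  cinr : forall A B, Hom B (cp A B);
  copair : forall A B Z, Hom A Z -> Hom B Z -> Hom (cp A B) Z }.
Arguments cp {C} _ _ _.
Arguments cinl {C} _ {A B}.
Arguments cinr {C} _ {A B}.
Arguments copair {C} _ {A B Z} _ _.

Definition IsBinCoprod {C : Category} (K : BinCoprod C) : Prop :=
  forall (A B Z : Ob C) (f : Hom A Z) (g : Hom B Z),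
    copair K f g ∘ cinl K = f /\ copair K f g ∘ cinr K = g /\
    (forall h : Hom (cp K A B) Z, h ∘ cinl K = f -> h ∘ cinr K = g -> h = copair K f g).

Definition Countable (I : Type) : Prop :=
  exists f : I -> nat, forall x y, f x = f y -> x = y.

Section Limits.
Context {C : Category}.

Definition IsCoproduct {I : Type} (A : I -> Ob C) (P : Ob C)
  (inj : forall i, Hom (A i) P) : Prop :=
  forall (Z : Ob C) (f : forall i, Hom (A i) Z),
    exists! g : Hom P Z, forall i, g ∘ inj i = f i.

Definition HasCountableCoproducts : Prop :=
  forall I : Type, Countable I -> forall A : I -> Ob C,
    exists (P : Ob C) (inj : forall i, Hom (A i) P), IsCoproduct A P inj.

Definition IsInitial (Z : Ob C) : Prop := forall X : Ob C, exists! f : Hom Z X, True.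

Definition IsPullback {A B D : Ob C} (f : Hom A D) (g : Hom B D)
  (P : Ob C) (p1 : Hom P A) (p2 : Hom P B) : Prop :=
  f ∘ p1 = g ∘ p2 /\
  forall (Q : Ob C) (q1 : Hom Q A) (q2 : Hom Q B), f ∘ q1 = g ∘ q2 ->
    exists! u : Hom Q P, p1 ∘ u = q1 /\ p2 ∘ u = q2.

Definition Monic {A B : Ob C} (m : Hom A B) : Prop :=
  forall (Z : Ob C) (x y : Hom Z A), m ∘ x = m ∘ y -> x = y.

Definition IsCoprodInj {A B : Ob C} (m : Hom A B) : Prop :=
  exists (A' : Ob C) (m' : Hom A' B),
    IsCoproduct (fun b : bool => if b then A else A') B
      (fun b : bool => match b as b0 return Hom (if b0 then A else A') B with
                       | true => m | false => m' end).

Definition Disjoint {A1 A2 B : Ob C} (m1 : Hom A1 B) (m2 : Hom A2 B) : Prop :=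
  exists (Q : Ob C) (p1 : Hom Q A1) (p2 : Hom Q A2),
    IsPullback m1 m2 Q p1 p2 /\ IsInitial Q.

Definition HyperExtensive : Prop :=
  HasCountableCoproducts /\
  (forall I : Type, Countable I -> forall (A : I -> Ob C) (P : Ob C)
     (inj : forall i, Hom (A i) P), IsCoproduct A P inj ->
     forall (B : Ob C) (h : Hom B P),
       (forall i, exists (Bi : Ob C) (ri : Hom Bi (A i)) (qi : Hom Bi B),
            IsPullback (inj i) h Bi ri qi) /\
       (forall (Bi : I -> Ob C) (ri : forall i, Hom (Bi i) (A i))
               (qi : forall i, Hom (Bi i) B),
          (forall i, IsPullback (inj i) h (Bi i) (ri i) (qi i)) ->
          IsCoproduct Bi B qi)) /\
  (forall I : Type, Countable I -> forall (A : I -> Ob C) (P : Ob C)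
     (inj : forall i, Hom (A i) P), IsCoproduct A P inj ->
     (forall i, Monic (inj i)) /\
     (forall i j, i <> j -> Disjoint (inj i) (inj j))) /\
  (forall I : Type, Countable I -> forall (A : I -> Ob C) (B : Ob C)
     (m : forall i, Hom (A i) B),
     (forall i, IsCoprodInj (m i)) ->
     (forall i j, i <> j -> Disjoint (m i) (m j)) ->
     forall (P : Ob C) (inj : forall i, Hom (A i) P) (g : Hom P B),
       IsCoproduct A P inj -> (forall i, g ∘ inj i = m i) -> IsCoprodInj g).

End Limits.

Definition PreservesCountableCoproducts {C : Category} (H : Functor C C) : Prop :=
  forall I : Type, Countable I -> forall (A : I -> Ob C) (P : Ob C)
    (inj : forall i, Hom (A i) P), IsCoproduct A P inj ->
    IsCoproduct (fun i => fobj H (A i)) (fobj H P) (fun i => fmor H (inj i)).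

Definition IsTerminalCoalg {C : Category} (H : Functor C C) {nu : Ob C}
  (t : Hom nu (fobj H nu)) : Prop :=
  forall (X : Ob C) (e : Hom X (fobj H X)),
    exists! h : Hom X nu, t ∘ h = fmor H h ∘ e.

(* ---------- Isomorphism of categories of structured objects over C ----------
   Each of the four categories is a category of objects with structure over C,
   whose morphisms are the C-morphisms between carriers satisfying a property,
   with identity and composition those of C. *)

Record ConcreteCat (C : Category) : Type := {
  CO : Type;
  CU : CO -> Ob C;
  CM : forall x y : CO, Hom (CU x) (CU y) -> Prop }.
Arguments CO {C} _.
Arguments CU {C} _ _.
Arguments CM {C} _ {x y} _.

Definition CHom {C : Category} (S : ConcreteCat C) (x y : CO S) : Type :=
  { h : Hom (CU S x) (CU S y) | CM S h }.

Definition Bij {A B : Type} (f : A -> B) : Prop :=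
  exists g : B -> A, (forall x, g (f x) = x) /\ (forall y, f (g y) = y).

Definition CatIso {C : Category} (S1 S2 : ConcreteCat C) : Prop :=
  exists (fo : CO S1 -> CO S2)
         (fm : forall x y, CHom S1 x y -> CHom S2 (fo x) (fo y)),
    Bij fo /\ (forall x y, Bij (fm x y)) /\
    (forall x (i : CHom S1 x x), proj1_sig i = idm (CU S1 x) ->
        proj1_sig (fm x x i) = idm (CU S2 (fo x))) /\
    (forall x y z (f : CHom S1 x y) (g : CHom S1 y z) (gf : CHom S1 x z),
        proj1_sig gf = proj1_sig g ∘ proj1_sig f ->
        proj1_sig (fm x z gf) = proj1_sig (fm y z g) ∘ proj1_sig (fm x y f)).

Section Algebras.
Context {C : Category} (K : BinCoprod C) (H : Functor C C).

Local Notation HO := (fobj H).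
Local Notation HM := (fmor H).
Local Notation "A ⊕ B" := (cp K A B) (at level 50, left associativity).

Definition sum_map {A B A' B' : Ob C} (f : Hom A A') (g : Hom B B')
  : Hom (A ⊕ B) (A' ⊕ B') := copair K (cinl K ∘ f) (cinr K ∘ g).

Definition IsAlgMor {A B : Ob C} (a : Hom (HO A) A) (b : Hom (HO B) B)
  (h : Hom A B) : Prop := h ∘ a = b ∘ HM h.

Definition IsSolution {A X : Ob C} (a : Hom (HO A) A) (e : Hom X (HO X ⊕ A))
  (s : Hom X A) : Prop :=
  s = copair K a (idm A) ∘ sum_map (HM s) (idm A) ∘ e.

Definition Cia {A : Ob C} (a : Hom (HO A) A) : Prop :=
  forall (X : Ob C) (e : Hom X (HO X ⊕ A)), exists! s, IsSolution a e s.

(* a choice of free cias (T Y, tau Y) with universal maps eta Y; ext b f is the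
   unique algebra morphism extending f *)
Record FreeCiaData : Type := {
  FT : Ob C -> Ob C;
  Ftau : forall Y, Hom (HO (FT Y)) (FT Y);
  Feta : forall Y, Hom Y (FT Y);
  Fext : forall (Y B : Ob C), Hom (HO B) B -> Hom Y B -> Hom (FT Y) B }.

Definition IsFreeCia (F : FreeCiaData) : Prop :=
  forall Y : Ob C, Cia (Ftau F Y) /\
    forall (B : Ob C) (b : Hom (HO B) B), Cia b -> forall f : Hom Y B,
      IsAlgMor (Ftau F Y) b (Fext F Y B b f) /\ Fext F Y B b f ∘ Feta F Y = f /\
      (forall g : Hom (FT F Y) B, IsAlgMor (Ftau F Y) b g -> g ∘ Feta F Y = f ->
         g = Fext F Y B b f).

Section Monad.
Variable F : FreeCiaData.
Local Notation T := (FT F).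

Definition Tmap {X Y : Ob C} (f : Hom X Y) : Hom (T X) (T Y) :=
  Fext F X (T Y) (Ftau F Y) (Feta F Y ∘ f).

Definition Tmu (Y : Ob C) : Hom (T (T Y)) (T Y) :=
  Fext F (T Y) (T Y) (Ftau F Y) (idm (T Y)).

Record EMObj : Type := {
  em_car : Ob C;
  em_alg : Hom (T em_car) em_car;
  em_unit : em_alg ∘ Feta F em_car = idm em_car;
  em_assoc : em_alg ∘ Tmu em_car = em_alg ∘ Tmap em_alg }.

Definition EMCat : ConcreteCat C := {|
  CO := EMObj; CU := em_car;
  CM := fun x y h => h ∘ em_alg x = em_alg y ∘ Tmap h |}.
End Monad.

(* (2) the slice category nu H / Alg H, nu H carrying the algebra t^{-1} *)
Section Slice.
Variables (nu : Ob C) (tinv : Hom (HO nu) nu).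

Record SliceObj : Type := {
  sl_car : Ob C;
  sl_alg : Hom (HO sl_car) sl_car;
  sl_map : Hom nu sl_car;
  sl_mor : IsAlgMor tinv sl_alg sl_map }.

Definition SliceCat : ConcreteCat C := {|
  CO := SliceObj; CU := sl_car;
  CM := fun x y f => IsAlgMor (sl_alg x) (sl_alg y) f /\ f ∘ sl_map x = sl_map y |}.
End Slice.

Record BloomObj : Type := {
  bl_car : Ob C;
  bl_alg : Hom (HO bl_car) bl_car;
  bl_dag : forall X : Ob C, Hom X (HO X) -> Hom X bl_car;
  bl_sol : forall (X : Ob C) (e : Hom X (HO X)),
      bl_dag X e = bl_alg ∘ HM (bl_dag X e) ∘ e;
  bl_fun : forall (X Y : Ob C) (e : Hom X (HO X)) (f : Hom Y (HO Y)) (h : Hom X Y),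
      f ∘ h = HM h ∘ e -> bl_dag Y f ∘ h = bl_dag X e }.

Definition BloomCat : ConcreteCat C := {|
  CO := BloomObj; CU := bl_car;
  CM := fun x y h => IsAlgMor (bl_alg x) (bl_alg y) h /\
          forall (X : Ob C) (e : Hom X (HO X)), h ∘ bl_dag x X e = bl_dag y X e |}.

Definition bullet {X Y Z : Ob C} (h : Hom Y Z) (e : Hom X (HO X ⊕ Y))
  : Hom X (HO X ⊕ Z) := sum_map (idm (HO X)) h ∘ e.

Definition can (X Y : Ob C) : Hom (HO X ⊕ HO Y) (HO (X ⊕ Y)) :=
  copair K (HM (cinl K)) (HM (cinr K)).

(* the canonical associativity isomorphism P + (Q + R) -> (P + Q) + R,
   left implicit in the paper's formula for e ⊕ f *)
Definition cp_assoc (P Q R : Ob C) : Hom (P ⊕ (Q ⊕ R)) ((P ⊕ Q) ⊕ R) :=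
  copair K (cinl K ∘ cinl K) (copair K (cinl K ∘ cinr K) (cinr K)).

Definition oplus {X Y A : Ob C} (e : Hom X (HO X ⊕ Y)) (f : Hom Y (HO Y ⊕ A))
  : Hom (X ⊕ Y) (HO (X ⊕ Y) ⊕ A) :=
  sum_map (can X Y) (idm A) ∘ cp_assoc (HO X) (HO Y) A
    ∘ sum_map (idm (HO X)) f ∘ copair K e (cinr K).

Record ElgotObj : Type := {
  el_car : Ob C;
  el_alg : Hom (HO el_car) el_car;
  el_dag : forall X : Ob C, Hom X (HO X ⊕ el_car) -> Hom X el_car;
  el_sol : forall (X : Ob C) (e : Hom X (HO X ⊕ el_car)),
      IsSolution el_alg e (el_dag X e);
  el_fun : forall (X Y : Ob C) (e : Hom X (HO X ⊕ el_car))
             (f : Hom Y (HO Y ⊕ el_car)) (h : Hom X Y),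
      f ∘ h = sum_map (HM h) (idm el_car) ∘ e -> el_dag Y f ∘ h = el_dag X e;
  el_comp : forall (X Y : Ob C) (e : Hom X (HO X ⊕ Y)) (f : Hom Y (HO Y ⊕ el_car)),
      el_dag (X ⊕ Y) (oplus e f) ∘ cinl K = el_dag X (bullet (el_dag Y f) e) }.

Definition ElgotCat : ConcreteCat C := {|
  CO := ElgotObj; CU := el_car;
  CM := fun x y h => forall (X : Ob C) (e : Hom X (HO X ⊕ el_car x)),
          h ∘ el_dag x X e = el_dag y X (bullet h e) |}.

End Algebras.

(* Main.v *)
Require Import Defs.
From Stdlib Require Import ClassicalEpsilon FunctionalExtensionality ProofIrrelevance.

Section Basics.
Context (C : Category) (K : BinCoprod C) (H : Functor C C)
  (hC : IsCategory C) (hK : IsBinCoprod K) (hH : IsFunctor H).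

Local Notation HO := (fobj H).
Local Notation HM := (fmor H).

Lemma idl {a b : Ob C} (f : Hom a b) : idm b ∘ f = f.
Proof. apply (proj1 hC). Qed.
Lemma idr {a b : Ob C} (f : Hom a b) : f ∘ idm a = f.
Proof. apply (proj1 (proj2 hC)). Qed.
Lemma assoc {a b c d : Ob C} (h : Hom c d) (g : Hom b c) (f : Hom a b) :
  h ∘ (g ∘ f) = h ∘ g ∘ f.
Proof. apply (proj2 (proj2 hC)). Qed.
Lemma Hid (a : Ob C) : HM (idm a) = idm (HO a).
Proof. apply (proj1 hH). Qed.
Lemma Hcomp {a b c : Ob C} (g : Hom b c) (f : Hom a b) : HM (g ∘ f) = HM g ∘ HM f.
Proof. apply (proj2 hH). Qed.
Lemma cpl {A B Z : Ob C} (f : Hom A Z) (g : Hom B Z) : copair K f g ∘ cinl K = f.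
Proof. apply (hK A B Z f g). Qed.
Lemma cpr {A B Z : Ob C} (f : Hom A Z) (g : Hom B Z) : copair K f g ∘ cinr K = g.
Proof. apply (hK A B Z f g). Qed.
Lemma cpext {A B Z : Ob C} (h1 h2 : Hom (cp K A B) Z) :
  h1 ∘ cinl K = h2 ∘ cinl K -> h1 ∘ cinr K = h2 ∘ cinr K -> h1 = h2.
Proof.
  intros E1 E2. destruct (hK A B Z (h2 ∘ cinl K) (h2 ∘ cinr K)) as [_ [_ U]].
  rewrite (U h1 E1 E2). symmetry. apply U; reflexivity.
Qed.

Lemma pre {a b c : Ob C} {x : Hom b c} {y : Hom a b} {z : Hom a c} :
  x ∘ y = z -> forall d (P : Hom c d), P ∘ x ∘ y = P ∘ z.
Proof. intros E d P. rewrite <- assoc, E. reflexivity. Qed.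
Lemma pre3 {a b c e : Ob C} {x : Hom c e} {y : Hom b c} {w : Hom a b} {z : Hom a e} :
  x ∘ y ∘ w = z -> forall d (P : Hom e d), P ∘ x ∘ y ∘ w = P ∘ z.
Proof. intros E d P. rewrite <- !assoc. rewrite (assoc x y w), E. reflexivity. Qed.

Lemma cp_comp {A B Z W : Ob C} (h : Hom Z W) (f : Hom A Z) (g : Hom B Z) :
  h ∘ copair K f g = copair K (h ∘ f) (h ∘ g).
Proof. apply cpext; rewrite <- assoc; rewrite ?cpl, ?cpr; reflexivity. Qed.

Lemma sm_l {A B A' B' : Ob C} (f : Hom A A') (g : Hom B B') :
  sum_map K f g ∘ cinl K = cinl K ∘ f.
Proof. apply cpl. Qed.
Lemma sm_r {A B A' B' : Ob C} (f : Hom A A') (g : Hom B B') :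
  sum_map K f g ∘ cinr K = cinr K ∘ g.
Proof. apply cpr. Qed.
Lemma cp_sm {A B A' B' Z : Ob C} (f : Hom A A') (g : Hom B B') (f' : Hom A' Z) (g' : Hom B' Z) :
  copair K f' g' ∘ sum_map K f g = copair K (f' ∘ f) (g' ∘ g).
Proof.
  apply cpext; rewrite <- assoc; rewrite ?sm_l, ?sm_r, ?cpl, ?cpr, assoc, ?cpl, ?cpr; reflexivity.
Qed.
Lemma sm_sm {A B A' B' A'' B'' : Ob C} (f : Hom A A') (g : Hom B B') (f' : Hom A' A'') (g' : Hom B' B'') :
  sum_map K f' g' ∘ sum_map K f g = sum_map K (f' ∘ f) (g' ∘ g).
Proof. unfold sum_map at 1. rewrite cp_sm. unfold sum_map. rewrite !assoc. reflexivity. Qed.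
Lemma cp_id {A B : Ob C} : copair K (cinl K) (cinr K) = idm (cp K A B).
Proof. apply cpext; rewrite ?cpl, ?cpr, idl; reflexivity. Qed.
Lemma sm_id {A B : Ob C} : sum_map K (idm A) (idm B) = idm (cp K A B).
Proof. unfold sum_map. rewrite !idr. apply cp_id. Qed.


Ltac csimp :=
  repeat progress (rewrite ?assoc; rewrite ?cpl, ?cpr, ?sm_l, ?sm_r, ?cp_sm;
    rewrite ?(pre (cpl _ _)), ?(pre (cpr _ _)), ?(pre (sm_l _ _)), ?(pre (sm_r _ _)),
      ?(pre (cp_sm _ _ _ _)); rewrite ?cp_comp; rewrite ?idl, ?idr, ?Hid).

Lemma dchoice {I : Type} {T : I -> Type} (P : forall i, T i -> Prop) :
  (forall i, exists x : T i, P i x) -> exists f : forall i, T i, forall i, P i (f i).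
Proof.
  intros h. exists (fun i => proj1_sig (constructive_indefinite_description _ (h i))).
  intro i. exact (proj2_sig (constructive_indefinite_description _ (h i))).
Qed.

Definition Bin2 {A1 A2 B : Ob C} (u1 : Hom A1 B) (u2 : Hom A2 B) : Prop :=
  (forall Z (f : Hom A1 Z) (g : Hom A2 Z), exists h, h ∘ u1 = f /\ h ∘ u2 = g) /\
  (forall Z (h h' : Hom B Z), h ∘ u1 = h' ∘ u1 -> h ∘ u2 = h' ∘ u2 -> h = h').

Definition binj {A1 A2 B : Ob C} (u1 : Hom A1 B) (u2 : Hom A2 B) :
  forall b : bool, Hom (if b then A1 else A2) B :=
  fun b => match b as b0 return Hom (if b0 then A1 else A2) B with
           | true => u1 | false => u2 end.

Lemma Bin2_cop {A1 A2 B : Ob C} (u1 : Hom A1 B) (u2 : Hom A2 B) :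
  Bin2 u1 u2 <-> IsCoproduct (fun b : bool => if b then A1 else A2) B (binj u1 u2).
Proof.
  split.
  - intros [E U] Z f. destruct (E Z (f true) (f false)) as [h [h1 h2]].
    exists h. split.
    + intros []; assumption.
    + intros h' Hh'. apply U; [rewrite h1; symmetry; apply (Hh' true) | rewrite h2; symmetry; apply (Hh' false)].
  - intros Hc. split.
    + intros Z f g.
      destruct (Hc Z (fun b => match b as b0 return Hom (if b0 then A1 else A2) Z with
                                | true => f | false => g end)) as [h [Hh _]].
      exists h. split; [apply (Hh true) | apply (Hh false)].
    + intros Z h h' E1 E2.
      destruct (Hc Z (fun b => match b as b0 return Hom (if b0 then A1 else A2) Z with
                                | true => h ∘ u1 | false => h ∘ u2 end)) as [k [Hk Uk]].
      transitivity k; [symmetry|]; apply Uk; intros []; simpl; auto.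
Qed.

Lemma CoprodInj_iff {A B : Ob C} (m : Hom A B) :
  IsCoprodInj m <-> exists A' (m' : Hom A' B), Bin2 m m'.
Proof.
  split; intros [A' [m' Hm]]; exists A', m'; apply Bin2_cop; exact Hm.
Qed.

Lemma Bin2_K (A B : Ob C) : Bin2 (@cinl C K A B) (cinr K).
Proof.
  split.
  - intros Z f g. exists (copair K f g). split; [apply cpl|apply cpr].
  - intros Z h h'. apply cpext.
Qed.

Lemma Bin2_sym {A1 A2 B : Ob C} (u1 : Hom A1 B) (u2 : Hom A2 B) : Bin2 u1 u2 -> Bin2 u2 u1.
Proof.
  intros [E U]. split.
  - intros Z f g. destruct (E Z g f) as [h [h1 h2]]. exists h; auto.
  - intros Z h h' e1 e2. apply U; auto.
Qed.

Lemma Bin2_iso_post {A1 A2 B B' : Ob C} (u1 : Hom A1 B) (u2 : Hom A2 B)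
  (phi : Hom B B') (psi : Hom B' B) :
  psi ∘ phi = idm B -> phi ∘ psi = idm B' -> Bin2 u1 u2 -> Bin2 (phi ∘ u1) (phi ∘ u2).
Proof.
  intros e1 e2 [E U]. split.
  - intros Z f g. destruct (E Z f g) as [h [h1 h2]]. exists (h ∘ psi).
    rewrite !assoc, (pre e1), !idr. auto.
  - intros Z h h' k1 k2. rewrite !assoc in k1. rewrite !assoc in k2.
    rewrite <- (idr h), <- (idr h'), <- e2, !assoc. f_equal. apply U; auto.
Qed.

Lemma Bin2_iso_pre {A1 A1' A2 B : Ob C} (u1 : Hom A1 B) (u2 : Hom A2 B)
  (phi : Hom A1' A1) (psi : Hom A1 A1') :
  psi ∘ phi = idm A1' -> phi ∘ psi = idm A1 -> Bin2 u1 u2 -> Bin2 (u1 ∘ phi) u2.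
Proof.
  intros e1 e2 [E U]. split.
  - intros Z f g. destruct (E Z (f ∘ psi) g) as [h [h1 h2]]. exists h.
    rewrite assoc, h1, <- assoc, e1, idr. auto.
  - intros Z h h' k1 k2. apply U; auto. rewrite !assoc in k1.
    rewrite <- (idr (h ∘ u1)), <- (idr (h' ∘ u1)), <- e2, !assoc, k1. reflexivity.
Qed.

Lemma Bin2_assoc {A1 A2 C1 C2 B : Ob C} (u1 : Hom A1 B) (u2 : Hom A2 B)
  (v1 : Hom C1 A2) (v2 : Hom C2 A2) :
  Bin2 u1 u2 -> Bin2 v1 v2 -> Bin2 (copair K u1 (u2 ∘ v1)) (u2 ∘ v2).
Proof.
  intros [E U] [E' U']. split.
  - intros Z f g.
    destruct (E' Z (f ∘ cinr K) g) as [k [k1 k2]].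
    destruct (E Z (f ∘ cinl K) k) as [h [h1 h2]].
    exists h. split.
    + apply cpext; rewrite <- assoc, ?cpl, ?cpr; auto. rewrite assoc, h2; auto.
    + rewrite assoc, h2; auto.
  - intros Z h h' e1 e2.
    assert (a1 := f_equal (fun x => x ∘ cinl K) e1). simpl in a1.
    assert (a2 := f_equal (fun x => x ∘ cinr K) e1). simpl in a2.
    rewrite <- !assoc, !cpl in a1. rewrite <- !assoc, !cpr in a2.
    apply U; auto. apply U'; rewrite <- !assoc; auto.
Qed.

Lemma Bin2_assoc2 {A1 A2 C1 C2 B : Ob C} (u1 : Hom A1 B) (u2 : Hom A2 B)
  (v1 : Hom C1 A1) (v2 : Hom C2 A1) :
  Bin2 u1 u2 -> Bin2 v1 v2 -> Bin2 (u1 ∘ v1) (copair K (u1 ∘ v2) u2).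
Proof.
  intros h1 h2. apply Bin2_sym.
  apply Bin2_sym in h1. apply Bin2_sym in h2.
  pose proof (Bin2_assoc _ _ _ _ h1 h2) as X.
  apply (Bin2_iso_pre _ _ (copair K (cinr K) (cinl K)) (copair K (cinr K) (cinl K))) in X.
  - replace (copair K u2 (u1 ∘ v2) ∘ copair K (cinr K) (cinl K)) with (copair K (u1 ∘ v2) u2) in X.
    + exact X.
    + rewrite cp_comp, cpl, cpr. reflexivity.
  - rewrite cp_comp, cpl, cpr. apply cp_id.
  - rewrite cp_comp, cpl, cpr. apply cp_id.
Qed.

Lemma Bin2_H {A1 A2 B : Ob C} (u1 : Hom A1 B) (u2 : Hom A2 B) :
  PreservesCountableCoproducts H -> Bin2 u1 u2 -> Bin2 (HM u1) (HM u2).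
Proof.
  intros hp Hb. apply Bin2_cop in Hb. apply Bin2_cop.
  assert (cb : Countable bool).
  { exists (fun b : bool => if b then 0 else 1). intros [] []; simpl; congruence. }
  pose proof (hp bool cb _ B _ Hb) as X.
  intros Z f. destruct (X Z (fun b => match b as b0 return Hom (HO (if b0 then A1 else A2)) Z with
        | true => f true | false => f false end)) as [g [Hg Ug]].
  exists g. split.
  - intros []; apply (Hg true) || apply (Hg false).
  - intros g' Hg'. apply Ug. intros []; apply (Hg' true) || apply (Hg' false).
Qed.


Lemma oplus_inr {X Y A Z : Ob C} (e : Hom X (cp K (HO X) Y)) (f : Hom Y (cp K (HO Y) A))
  (P : Hom (HO (cp K X Y)) Z) (Q : Hom A Z) :
  copair K P Q ∘ oplus K H e f ∘ cinr K = copair K (P ∘ HM (cinr K)) Q ∘ f.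
Proof.
  unfold oplus, cp_assoc, can. csimp. reflexivity.
Qed.

Lemma oplus_inl {X Y A Z : Ob C} (e : Hom X (cp K (HO X) Y)) (f : Hom Y (cp K (HO Y) A))
  (P : Hom (HO (cp K X Y)) Z) (Q : Hom A Z) :
  copair K P Q ∘ oplus K H e f ∘ cinl K =
  copair K (P ∘ HM (cinl K)) (copair K (P ∘ HM (cinr K)) Q ∘ f) ∘ e.
Proof.
  unfold oplus, cp_assoc, can. csimp. reflexivity.
Qed.

Section Hyper.
Context (hext : @HyperExtensive C) (hpres : PreservesCountableCoproducts H).

Lemma cnt_bool : Countable bool.
Proof. exists (fun b : bool => if b then 0 else 1). intros [] []; simpl; congruence. Qed.
Lemma cnt_nat : Countable nat.
Proof. exists (fun n => n). auto. Qed.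
Lemma cnt_empty : Countable Empty_set.
Proof. exists (fun e : Empty_set => match e with end). intros []. Qed.

Definition ConesInit {A1 A2 B : Ob C} (u : Hom A1 B) (v : Hom A2 B) : Prop :=
  forall Z (z1 : Hom Z A1) (z2 : Hom Z A2), u ∘ z1 = v ∘ z2 -> IsInitial Z.

Lemma init_eq {Z X : Ob C} (hZ : IsInitial Z) (f g : Hom Z X) : f = g.
Proof. destruct (hZ X) as [k [_ U]]. rewrite <- (U f I), <- (U g I). reflexivity. Qed.

Definition efam : Empty_set -> Ob C := fun e => match e with end.
Definition einj (Z : Ob C) : forall e : Empty_set, Hom (efam e) Z := fun e => match e with end.

Lemma init_cop (Z : Ob C) : IsInitial Z <-> IsCoproduct efam Z (einj Z).
Proof.
  split.
  - intros hZ X f. destruct (hZ X) as [k [_ U]]. exists k. split; [intros []|]. intros; apply U; auto.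
  - intros hc X. destruct (hc X (einj X)) as [k [_ U]]. exists k. split; auto.
    intros; apply U; intros [].
Qed.

Lemma ex_init : exists Z0 : Ob C, IsInitial Z0.
Proof.
  destruct hext as [hcc _]. destruct (hcc Empty_set cnt_empty efam) as [P [inj hP]].
  exists P. intros X. destruct (hP X (einj X)) as [k [_ U]]. exists k. split; auto.
  intros; apply U; intros [].
Qed.

Lemma strict {Z Z0 : Ob C} (f : Hom Z Z0) : IsInitial Z0 -> IsInitial Z.
Proof.
  intros h0. destruct hext as [_ [huniv _]].
  assert (hc : IsCoproduct efam Z0 (fun e => match e with end)).
  { apply init_cop in h0. intros X g. destruct (h0 X g) as [k [_ U]]. exists k.
    split; [intros []|]. intros; apply U; intros []. }
  destruct (huniv Empty_set cnt_empty efam Z0 _ hc Z f) as [_ H2].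
  apply init_cop.
  apply (H2 efam (fun e : Empty_set => match e as e0 return Hom (efam e0) (efam e0) with end) (einj Z)).
  intros [].
Qed.

Lemma Bin2_disj {A1 A2 B : Ob C} (u1 : Hom A1 B) (u2 : Hom A2 B) :
  Bin2 u1 u2 -> ConesInit u1 u2.
Proof.
  intros hb. apply Bin2_cop in hb. destruct hext as [_ [_ [hd _]]].
  destruct (hd bool cnt_bool _ B _ hb) as [_ hdj].
  destruct (hdj true false ltac:(discriminate)) as [Q [p1 [p2 [[_ pb] hQ]]]].
  intros Z z1 z2 e. destruct (pb Z z1 z2 e) as [w _]. exact (strict w hQ).
Qed.

Lemma Bin2_monic {A1 A2 B : Ob C} (u1 : Hom A1 B) (u2 : Hom A2 B) :
  Bin2 u1 u2 -> Monic u1 /\ Monic u2.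
Proof.
  intros hb. apply Bin2_cop in hb. destruct hext as [_ [_ [hd _]]].
  destruct (hd bool cnt_bool _ B _ hb) as [hm _]. exact (conj (hm true) (hm false)).
Qed.

Lemma Cones_sym {A1 A2 B : Ob C} (u : Hom A1 B) (v : Hom A2 B) : ConesInit u v -> ConesInit v u.
Proof. intros h Z z1 z2 e. apply (h Z z2 z1). auto. Qed.

Lemma Cones_Disjoint {A1 A2 B : Ob C} (u : Hom A1 B) (v : Hom A2 B) : ConesInit u v -> Disjoint u v.
Proof.
  intros h. destruct ex_init as [Z0 h0].
  destruct (h0 A1) as [p1 _]. destruct (h0 A2) as [p2 _].
  exists Z0, p1, p2. split; auto. split.
  - apply init_eq; auto.
  - intros Q q1 q2 e. pose proof (h Q q1 q2 e) as hQ. destruct (hQ Z0) as [w _].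
    exists w. split; [split; apply init_eq; auto|]. intros; apply init_eq; auto.
Qed.

Lemma pull_bin {A1 A2 B X : Ob C} (u1 : Hom A1 B) (u2 : Hom A2 B) (h : Hom X B) :
  Bin2 u1 u2 -> exists P1 P2 (p1 : Hom P1 A1) (x1 : Hom P1 X) (p2 : Hom P2 A2) (x2 : Hom P2 X),
    u1 ∘ p1 = h ∘ x1 /\ u2 ∘ p2 = h ∘ x2 /\ Bin2 x1 x2.
Proof.
  intros hb. apply Bin2_cop in hb. destruct hext as [_ [huniv _]].
  destruct (huniv bool cnt_bool _ B _ hb X h) as [H1 H2].
  destruct (H1 true) as [P1 [p1 [x1 pb1]]]. destruct (H1 false) as [P2 [p2 [x2 pb2]]].
  exists P1, P2, p1, x1, p2, x2. split; [apply pb1|]. split; [apply pb2|].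
  apply Bin2_cop.
  apply (H2 (fun b : bool => if b then P1 else P2)
            (fun b => match b as b0 return Hom (if b0 then P1 else P2) (if b0 then A1 else A2) with
                      | true => p1 | false => p2 end)
            (binj x1 x2)).
  intros []; assumption.
Qed.

Lemma pull_cop {I : Type} (cI : Countable I) (A : I -> Ob C) (P : Ob C)
  (inj : forall i, Hom (A i) P) {X : Ob C} (h : Hom X P) :
  IsCoproduct A P inj ->
  exists (Bi : I -> Ob C) (ri : forall i, Hom (Bi i) (A i)) (qi : forall i, Hom (Bi i) X),
    (forall i, inj i ∘ ri i = h ∘ qi i) /\ IsCoproduct Bi X qi.
Proof.
  intros hc. destruct hext as [_ [huniv _]].
  destruct (huniv I cI A P inj hc X h) as [H1 H2].
  destruct (dchoice (T := fun i => {Bi : Ob C & (Hom Bi (A i) * Hom Bi X)%type})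
     (fun i x => IsPullback (inj i) h (projT1 x) (fst (projT2 x)) (snd (projT2 x)))) as [f Hf].
  { intros i. destruct (H1 i) as [Bi [ri [qi pb]]]. exists (existT _ Bi (ri, qi)). exact pb. }
  exists (fun i => projT1 (f i)), (fun i => fst (projT2 (f i))), (fun i => snd (projT2 (f i))).
  split.
  - intros i. apply (Hf i).
  - exact (H2 _ (fun i => fst (projT2 (f i))) _ Hf).
Qed.

Lemma coprod_init {I : Type} (A : I -> Ob C) (P : Ob C) (inj : forall i, Hom (A i) P) :
  IsCoproduct A P inj -> (forall i, IsInitial (A i)) -> IsInitial P.
Proof.
  intros hc hi X.
  destruct (dchoice (T := fun i => Hom (A i) X) (fun i _ => True)) as [f _].
  { intros i. destruct (hi i X) as [k _]. exists k; auto. }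
  destruct (hc X f) as [g [_ U]]. exists g. split; auto.
  intros g' _. destruct (hc X f) as [g0 [_ U0]].
  transitivity g0; [symmetry|]; apply U0; intros i; apply init_eq; auto.
Qed.

Lemma Bin2_init_iso {A1 A2 B : Ob C} (u1 : Hom A1 B) (u2 : Hom A2 B) :
  Bin2 u1 u2 -> IsInitial A1 -> exists psi : Hom B A2, psi ∘ u2 = idm A2 /\ u2 ∘ psi = idm B.
Proof.
  intros [E U] hA. destruct (hA A2) as [z _].
  destruct (E A2 z (idm A2)) as [psi [p1 p2]]. exists psi. split; auto.
  apply U.
  - apply init_eq; auto.
  - rewrite <- assoc, p2, idr, idl. reflexivity.
Qed.

Lemma comp_uniq {A R R' B : Ob C} (m : Hom A B) (r : Hom R B) (r' : Hom R' B) :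
  Bin2 m r -> Bin2 m r' ->
  exists (c : Hom R R') (d : Hom R' R), r' ∘ c = r /\ r ∘ d = r' /\ d ∘ c = idm R /\ c ∘ d = idm R'.
Proof.
  intros h1 h2.
  assert (half : forall S S' (s : Hom S B) (s' : Hom S' B), Bin2 m s -> Bin2 m s' ->
            exists c : Hom S S', s' ∘ c = s).
  { clear r r' h1 h2. intros R0 R0' r r' h1 h2.
    destruct (pull_bin m r' r h2) as [P1 [P2 [p1 [x1 [p2 [x2 [e1 [e2 hb]]]]]]]].
    assert (i1 : IsInitial P1) by (apply (Bin2_disj _ _ h1 _ p1 x1 e1)).
    destruct (Bin2_init_iso _ _ hb i1) as [psi [q1 q2]].
    exists (p2 ∘ psi). rewrite assoc, e2, <- assoc, q2, idr. reflexivity. }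
  destruct (half _ _ r r' h1 h2) as [c hc]. destruct (half _ _ r' r h2 h1) as [d hd].
  exists c, d. split; auto. split; auto.
  destruct (Bin2_monic _ _ h1) as [_ mr]. destruct (Bin2_monic _ _ h2) as [_ mr'].
  split.
  - apply mr. rewrite assoc, hd, hc, idr. reflexivity.
  - apply mr'. rewrite assoc, hc, hd, idr. reflexivity.
Qed.

Definition Sep {A1 A2 B : Ob C} (u : Hom A1 B) (v : Hom A2 B) : Prop :=
  exists C' (c : Hom C' B) (f : Hom A2 C'), Bin2 u c /\ v = c ∘ f.

Lemma Sep_cones {A1 A2 B : Ob C} (u : Hom A1 B) (v : Hom A2 B) : Sep u v -> ConesInit u v.
Proof.
  intros [C' [c [f [hb ->]]]] Z z1 z2 e. apply (Bin2_disj _ _ hb Z z1 (f ∘ z2)).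
  rewrite e, assoc. reflexivity.
Qed.

Lemma Sep_pre {A1 A2 A3 B : Ob C} (u : Hom A1 B) (v : Hom A2 B) (g : Hom A3 A2) :
  Sep u v -> Sep u (v ∘ g).
Proof. intros [C' [c [f [hb ->]]]]. exists C', c, (f ∘ g). split; auto. symmetry; apply assoc. Qed.


Lemma sol_form {A X : Ob C} (a : Hom (HO A) A) (e : Hom X (cp K (HO X) A)) (s : Hom X A) :
  IsSolution K H a e s <-> s = copair K (a ∘ HM s) (idm A) ∘ e.
Proof. unfold IsSolution. rewrite cp_sm, idl. tauto. Qed.

Definition sol {A : Ob C} (a : Hom (HO A) A) (ha : Cia K H a) {X : Ob C}
  (e : Hom X (cp K (HO X) A)) : Hom X A :=
  proj1_sig (constructive_indefinite_description _ (ha X e)).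

Lemma sol_spec {A : Ob C} (a : Hom (HO A) A) (ha : Cia K H a) {X : Ob C}
  (e : Hom X (cp K (HO X) A)) : sol a ha e = copair K (a ∘ HM (sol a ha e)) (idm A) ∘ e.
Proof.
  apply sol_form. exact (proj1 (proj2_sig (constructive_indefinite_description _ (ha X e)))).
Qed.

Lemma sol_uniq {A : Ob C} (a : Hom (HO A) A) (ha : Cia K H a) {X : Ob C}
  (e : Hom X (cp K (HO X) A)) (s : Hom X A) :
  s = copair K (a ∘ HM s) (idm A) ∘ e -> s = sol a ha e.
Proof.
  intros hs. symmetry. apply (proj2 (proj2_sig (constructive_indefinite_description _ (ha X e)))).
  apply sol_form. exact hs.
Qed.

Lemma cia_uniq {A : Ob C} (a : Hom (HO A) A) (ha : Cia K H a) {X : Ob C}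
  (e : Hom X (cp K (HO X) A)) (s s' : Hom X A) :
  s = copair K (a ∘ HM s) (idm A) ∘ e -> s' = copair K (a ∘ HM s') (idm A) ∘ e -> s = s'.
Proof. intros h1 h2. rewrite (sol_uniq a ha e s h1), (sol_uniq a ha e s' h2). reflexivity. Qed.

Section Free.
Context (F : FreeCiaData H) (hF : IsFreeCia K H F).
Local Notation T := (FT H F).
Local Notation tau := (Ftau H F).
Local Notation eta := (Feta H F).

Lemma ciaT (Y : Ob C) : Cia K H (tau Y).
Proof. exact (proj1 (hF Y)). Qed.

Lemma ext_alg {Y B : Ob C} (b : Hom (HO B) B) (hb : Cia K H b) (f : Hom Y B) :
  Fext H F Y B b f ∘ tau Y = b ∘ HM (Fext H F Y B b f).
Proof. exact (proj1 (proj2 (hF Y) B b hb f)). Qed.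
Lemma ext_eta {Y B : Ob C} (b : Hom (HO B) B) (hb : Cia K H b) (f : Hom Y B) :
  Fext H F Y B b f ∘ eta Y = f.
Proof. exact (proj1 (proj2 (proj2 (hF Y) B b hb f))). Qed.
Lemma ext_uniq {Y B : Ob C} (b : Hom (HO B) B) (hb : Cia K H b) (f : Hom Y B) (g : Hom (T Y) B) :
  g ∘ tau Y = b ∘ HM g -> g ∘ eta Y = f -> g = Fext H F Y B b f.
Proof. exact (proj2 (proj2 (proj2 (hF Y) B b hb f)) g). Qed.
Lemma free_uniq {Y B : Ob C} (b : Hom (HO B) B) (hb : Cia K H b) (g g' : Hom (T Y) B) :
  g ∘ tau Y = b ∘ HM g -> g' ∘ tau Y = b ∘ HM g' -> g ∘ eta Y = g' ∘ eta Y -> g = g'.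
Proof.
  intros h1 h2 h3. rewrite (ext_uniq b hb (g' ∘ eta Y) g h1 h3).
  symmetry. apply ext_uniq; auto.
Qed.

Lemma tau_eta_Bin2 (Y : Ob C) : Bin2 (tau Y) (eta Y).
Proof.
  set (i := copair K (tau Y) (eta Y)).
  assert (il : i ∘ cinl K = tau Y) by apply cpl.
  assert (ir : i ∘ cinr K = eta Y) by apply cpr.
  set (b := cinl K ∘ HM i : Hom (HO (cp K (HO (T Y)) Y)) (cp K (HO (T Y)) Y)).
  assert (bdef : b = cinl K ∘ HM i) by reflexivity.
  clearbody b. clearbody i.
  assert (ib : i ∘ b = tau Y ∘ HM i) by (rewrite bdef, assoc, il; reflexivity).
  assert (hb : Cia K H b).
  { intros X e.
    set (u := sol (tau Y) (ciaT Y) (sum_map K (idm _) i ∘ e)).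
    assert (hu := sol_spec (tau Y) (ciaT Y) (sum_map K (idm _) i ∘ e)). fold u in hu.
    clearbody u.
    rewrite assoc, cp_sm, idr, idl in hu.
    assert (key : forall s', s' = copair K (b ∘ HM s') (idm _) ∘ e -> i ∘ s' = u).
    { intros s' hs. rewrite hu. apply cia_uniq with (a := tau Y) (e := sum_map K (idm _) i ∘ e).
      { exact (ciaT Y). }
      - rewrite assoc, cp_sm, idr, idl.
        rewrite hs at 1. rewrite assoc, cp_comp, assoc, ib, idr, <- assoc, <- Hcomp. reflexivity.
      - rewrite assoc, cp_sm, idr, idl. rewrite <- hu. exact hu. }
    exists (copair K (cinl K ∘ HM u) (idm _) ∘ e). split.
    - apply sol_form.
      assert (E : i ∘ (copair K (cinl K ∘ HM u) (idm _) ∘ e) = u).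
      { rewrite assoc, cp_comp, assoc, il, idr. symmetry; exact hu. }
      rewrite bdef at 1. rewrite <- assoc, <- Hcomp, E. reflexivity.
    - intros s' hs. apply sol_form in hs. pose proof (key s' hs) as E.
      rewrite hs. rewrite bdef. rewrite <- assoc, <- Hcomp, E. reflexivity. }
  set (k := Fext H F Y _ b (cinr K)).
  assert (k_alg : k ∘ tau Y = b ∘ HM k) by apply ext_alg, hb.
  assert (k_eta : k ∘ eta Y = cinr K) by apply ext_eta, hb.
  clearbody k.
  assert (ik : i ∘ k = idm (T Y)).
  { apply (free_uniq (tau Y) (ciaT Y)).
    - rewrite <- assoc, k_alg, assoc, ib, <- assoc, <- Hcomp. reflexivity.
    - rewrite idl, Hid, idr. reflexivity.
    - rewrite <- assoc, k_eta, ir, idl. reflexivity. }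
  assert (ki : k ∘ i = idm _).
  { apply cpext; rewrite <- assoc, ?il, ?ir, idl.
    - rewrite k_alg, bdef. rewrite <- assoc, <- Hcomp, ik, Hid, idr. reflexivity.
    - exact k_eta. }
  pose proof (Bin2_iso_post _ _ i k ki ik (Bin2_K (HO (T Y)) Y)) as X.
  rewrite il, ir in X. exact X.
Qed.

Fixpoint iterH (n : nat) (X : Ob C) : Ob C :=
  match n with 0 => X | S n => HO (iterH n X) end.

Fixpoint iota (Y : Ob C) (k : nat) : Hom (iterH k Y) (T Y) :=
  match k as k0 return Hom (iterH k0 Y) (T Y) with
  | 0 => eta Y
  | S k => tau Y ∘ HM (iota Y k) end.

Lemma Sep_step {Y A1 A2 : Ob C} (u : Hom A1 (T Y)) (v : Hom A2 (T Y)) :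
  Sep u v -> Sep (tau Y ∘ HM u) (tau Y ∘ HM v).
Proof.
  intros [C' [c [f [hb ->]]]].
  pose proof (Bin2_assoc2 _ _ _ _ (tau_eta_Bin2 Y) (Bin2_H _ _ hpres hb)) as X.
  exists (cp K (HO C') Y), (copair K (tau Y ∘ HM c) (eta Y)), (cinl K ∘ HM f).
  split; auto. rewrite assoc, cpl, Hcomp, assoc. reflexivity.
Qed.

Lemma Sep_iota_lt (Y : Ob C) : forall k l, k < l -> Sep (iota Y k) (iota Y l).
Proof.
  induction k as [|k IH]; intros [|l] hl; try (exfalso; inversion hl; fail).
  - simpl. exists (HO (T Y)), (tau Y), (HM (iota Y l)). split; auto.
    apply Bin2_sym, tau_eta_Bin2.
  - simpl. apply Sep_step. apply IH. apply le_S_n. exact hl.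
Qed.

Section Term.
Context (nu : Ob C) (t : Hom nu (HO nu)) (hterm : IsTerminalCoalg H t)
  (tinv : Hom (HO nu) nu) (htinv : tinv ∘ t = idm nu /\ t ∘ tinv = idm (HO nu)).

Definition jm (Y : Ob C) : Hom nu (T Y) := sol (tau Y) (ciaT Y) (cinl K ∘ t).

Lemma jm_eq (Y : Ob C) : jm Y = tau Y ∘ HM (jm Y) ∘ t.
Proof.
  unfold jm at 1. rewrite sol_spec, assoc, cpl. reflexivity.
Qed.

Lemma term_uniq {X : Ob C} (e : Hom X (HO X)) (h1 h2 : Hom X nu) :
  t ∘ h1 = HM h1 ∘ e -> t ∘ h2 = HM h2 ∘ e -> h1 = h2.
Proof.
  intros e1 e2. destruct (hterm X e) as [h [_ U]]. rewrite <- (U h1 e1), <- (U h2 e2). reflexivity.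
Qed.

Lemma Sep_iota_j (Y : Ob C) : forall k, Sep (iota Y k) (jm Y).
Proof.
  induction k as [|k IH].
  - simpl. exists (HO (T Y)), (tau Y), (HM (jm Y) ∘ t). split.
    + apply Bin2_sym, tau_eta_Bin2.
    + rewrite assoc. apply jm_eq.
  - simpl. rewrite (jm_eq Y). apply Sep_pre. apply Sep_step. exact IH.
Qed.

Lemma cop_ext {I : Type} {A : I -> Ob C} {P Z : Ob C} {inj : forall i, Hom (A i) P} :
  IsCoproduct A P inj -> forall g1 g2 : Hom P Z, (forall i, g1 ∘ inj i = g2 ∘ inj i) -> g1 = g2.
Proof.
  intros hc g1 g2 E. destruct (hc Z (fun i => g2 ∘ inj i)) as [g [_ U]].
  transitivity g; [symmetry|]; apply U; auto.
Qed.

Lemma cop_ex {I : Type} {A : I -> Ob C} {P Z : Ob C} {inj : forall i, Hom (A i) P} :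
  IsCoproduct A P inj -> forall f : forall i, Hom (A i) Z, exists g, forall i, g ∘ inj i = f i.
Proof. intros hc f. destruct (hc Z f) as [g [Hg _]]. eauto. Qed.

Lemma decomp (Y : Ob C) :
  exists (Q : Ob C) (q : forall k, Hom (iterH k Y) Q) (m : Hom Q (T Y)) (R : Ob C)
    (r : Hom R (T Y)) (c : Hom R (HO R)) (d : Hom (HO R) R) (u : Hom R nu) (j' : Hom nu R),
    IsCoproduct (fun k => iterH k Y) Q q /\ (forall k, m ∘ q k = iota Y k) /\ Bin2 m r /\
    d ∘ c = idm R /\ c ∘ d = idm (HO R) /\ tau Y ∘ HM r = r ∘ d /\
    t ∘ u = HM u ∘ c /\ r = jm Y ∘ u /\ r ∘ j' = jm Y /\ u ∘ j' = idm nu.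
Proof.
  destruct hext as [hcc [_ [_ hcoh]]].
  destruct (hcc nat cnt_nat (fun k => iterH k Y)) as [Q [q hQ]].
  destruct (cop_ex hQ (iota Y)) as [m hm].
  assert (hmi : IsCoprodInj m).
  { apply (hcoh nat cnt_nat (fun k => iterH k Y) (T Y) (iota Y)) with (P := Q) (inj := q); auto.
    - intros k. destruct (Sep_iota_j Y k) as [C' [c [f [hb _]]]].
      apply CoprodInj_iff. eauto.
    - intros k l hkl. apply Cones_Disjoint. destruct (PeanoNat.Nat.lt_total k l) as [hl|[hl|hl]].
      + apply Sep_cones, Sep_iota_lt, hl.
      + contradiction.
      + apply Cones_sym, Sep_cones, Sep_iota_lt, hl. }
  apply CoprodInj_iff in hmi. destruct hmi as [R [r hmr]].
  pose proof (hpres nat cnt_nat _ Q q hQ) as hHQ. simpl in hHQ.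
  destruct (cop_ex hHQ (fun k => q (S k))) as [sg' hsg'].
  set (sg := copair K (q 0) sg' : Hom (cp K Y (HO Q)) Q).
  destruct (cop_ex hQ (fun k => match k as k0 return Hom (iterH k0 Y) (cp K Y (HO Q)) with
              | 0 => cinl K | S k => cinr K ∘ HM (q k) end)) as [sgi hsgi].
  assert (e1 : sg ∘ sgi = idm Q).
  { apply (cop_ext hQ). intros [|k]; rewrite <- assoc, hsgi, idl; unfold sg.
    - apply cpl.
    - rewrite assoc, cpr. apply hsg'. }
  assert (e2 : sgi ∘ sg = idm _).
  { apply cpext; unfold sg; rewrite <- assoc, ?cpl, ?cpr, idl.
    - apply (hsgi 0).
    - apply (cop_ext hHQ). intro k. rewrite <- assoc, hsg'. apply (hsgi (S k)). }
  assert (e3 : m ∘ sg = copair K (eta Y) (tau Y ∘ HM m)).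
  { apply cpext; unfold sg; rewrite <- assoc, ?cpl, ?cpr.
    - apply (hm 0).
    - apply (cop_ext hHQ). intro k. rewrite <- assoc, hsg'; transitivity (iota Y (S k)); [exact (hm (S k))|]. simpl.
      rewrite <- assoc, <- Hcomp, hm. reflexivity. }
  clearbody sg.
  assert (hb2 : Bin2 m (tau Y ∘ HM r)).
  { pose proof (Bin2_assoc _ _ _ _ (Bin2_sym _ _ (tau_eta_Bin2 Y)) (Bin2_H _ _ hpres hmr)) as X.
    rewrite <- e3 in X. apply (Bin2_iso_pre _ _ sgi sg e1 e2) in X.
    rewrite <- assoc, e1, idr in X. exact X. }
  destruct (comp_uniq _ _ _ hmr hb2) as [c [d [ec [ed [edc ecd]]]]].
  destruct (hterm R c) as [u [hu _]].
  assert (ruj : r = jm Y ∘ u).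
  { apply (cia_uniq (tau Y) (ciaT Y) (cinl K ∘ c)).
    - rewrite assoc, cpl. rewrite <- ec at 1. reflexivity.
    - rewrite assoc, cpl. rewrite (jm_eq Y) at 1. rewrite <- assoc, hu, assoc, Hcomp, assoc. reflexivity. }
  destruct (pull_bin m r (jm Y) hmr) as [P1 [P2 [p1 [x1 [p2 [x2 [ex1 [ex2 hx]]]]]]]].
  assert (iP1 : IsInitial P1).
  { destruct (pull_cop cnt_nat _ Q q p1 hQ) as [Bi [ri [qi [eqi hqi]]]].
    apply (coprod_init _ _ _ hqi). intro k.
    apply (Sep_cones _ _ (Sep_iota_j Y k) _ (ri k) (x1 ∘ qi k)).
    rewrite <- (hm k), <- assoc, eqi, assoc, ex1, assoc. reflexivity. }
  destruct (Bin2_init_iso _ _ hx iP1) as [psi [epsi1 epsi2]].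
  exists Q, q, m, R, r, c, d, u, (p2 ∘ psi).
  assert (rj : r ∘ (p2 ∘ psi) = jm Y).
  { rewrite assoc, ex2, <- assoc, epsi2, idr. reflexivity. }
  split; [exact hQ|]. split; [exact hm|]. split; [exact hmr|]. split; [exact edc|].
  split; [exact ecd|]. split; [symmetry; exact ed|]. split; [exact hu|].
  split; [exact ruj|]. split; [exact rj|].
  - apply (term_uniq t).
    + destruct (Bin2_monic _ _ hb2) as [_ mon]. rewrite assoc, hu, <- assoc.
      assert (c ∘ (p2 ∘ psi) = HM (p2 ∘ psi) ∘ t) as ->.
      { apply mon. rewrite assoc, ec, rj, !assoc, (pre (eq_sym (Hcomp _ _))), rj. apply jm_eq. }
      rewrite assoc, <- Hcomp. reflexivity.
    + rewrite Hid, idl, idr. reflexivity.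
Qed.

Lemma U_lemma (Y A : Ob C) (a : Hom (HO A) A) (g1 g2 : Hom (T Y) A) :
  g1 ∘ tau Y = a ∘ HM g1 -> g2 ∘ tau Y = a ∘ HM g2 ->
  g1 ∘ eta Y = g2 ∘ eta Y -> g1 ∘ jm Y = g2 ∘ jm Y -> g1 = g2.
Proof.
  intros h1 h2 h3 h4.
  destruct (decomp Y) as [Q [q [m [R [r [c [d [u [j' [hQ [hm [hmr [edc [ecd [ed [hu [ruj [rj uj]]]]]]]]]]]]]]]]]].
  assert (it : forall k, g1 ∘ iota Y k = g2 ∘ iota Y k).
  { induction k as [|k IH]; simpl; auto.
    rewrite !assoc, h1, h2, <- !assoc, <- !Hcomp, IH. reflexivity. }
  apply (proj2 hmr).
  - apply (cop_ext hQ). intro k. rewrite <- !assoc, hm. apply it.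
  - rewrite ruj, !assoc, h4. reflexivity.
Qed.

Fixpoint itmap {Y A : Ob C} (a : Hom (HO A) A) (f : Hom Y A) (k : nat) : Hom (iterH k Y) A :=
  match k as k0 return Hom (iterH k0 Y) A with
  | 0 => f
  | S k => a ∘ HM (itmap a f k) end.

Lemma E_lemma (Y A : Ob C) (a : Hom (HO A) A) (f : Hom Y A) (h : Hom nu A) :
  h ∘ tinv = a ∘ HM h ->
  exists g : Hom (T Y) A, g ∘ tau Y = a ∘ HM g /\ g ∘ eta Y = f /\ g ∘ jm Y = h.
Proof.
  intros hh.
  destruct (decomp Y) as [Q [q [m [R [r [c [d [u [j' [hQ [hm [hmr [edc [ecd [ed [hu [ruj [rj uj]]]]]]]]]]]]]]]]]].
  destruct (cop_ex hQ (itmap a f)) as [gQ hgQ].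
  destruct (proj1 hmr A gQ (h ∘ u)) as [g [gm gr]].
  pose proof (hpres nat cnt_nat _ Q q hQ) as hHQ. simpl in hHQ.
  exists g. split; [|split].
  - apply (proj2 (Bin2_H _ _ hpres hmr)).
    + apply (cop_ext hHQ). intro k.
      rewrite !(pre (eq_sym (Hcomp m (q k)))), !hm, (pre (eq_sym (Hcomp g (iota Y k)))).
      transitivity (g ∘ iota Y (S k)); [symmetry; apply assoc|].
      rewrite <- (hm (S k)), assoc, gm, hgQ. simpl. rewrite <- (hm k), assoc, gm, hgQ. reflexivity.
    + transitivity (h ∘ (u ∘ d)).
      { rewrite <- assoc, ed, assoc, gr. symmetry; apply assoc. }
      assert (ud : u ∘ d = tinv ∘ HM u).
      { rewrite <- (idl (u ∘ d)), <- (proj1 htinv), <- assoc, (assoc t u d), hu.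
        rewrite <- (assoc (HM u) c d), ecd, idr. reflexivity. }
      rewrite ud, assoc, hh, <- !assoc, <- !Hcomp, gr. reflexivity.
  - transitivity (g ∘ iota Y 0); [reflexivity|]. rewrite <- (hm 0), assoc, gm, hgQ. reflexivity.
  - rewrite <- rj, assoc, gr, <- assoc, uj, idr. reflexivity.
Qed.

Lemma sol_fun {B X X' : Ob C} (b : Hom (HO B) B) (hb : Cia K H b)
  (e1 : Hom X (cp K (HO X) B)) (e2 : Hom X' (cp K (HO X') B)) (h : Hom X X') :
  e2 ∘ h = sum_map K (HM h) (idm B) ∘ e1 -> sol b hb e2 ∘ h = sol b hb e1.
Proof.
  intros E. apply sol_uniq.
  rewrite (sol_spec b hb e2) at 1. rewrite <- assoc, E, assoc, cp_sm, idl, <- assoc, <- Hcomp.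
  reflexivity.
Qed.

Lemma sol_post {B B' X : Ob C} (b : Hom (HO B) B) (hb : Cia K H b) (b' : Hom (HO B') B')
  (hb' : Cia K H b') (phi : Hom B B') (e : Hom X (cp K (HO X) B)) :
  phi ∘ b = b' ∘ HM phi -> phi ∘ sol b hb e = sol b' hb' (sum_map K (idm _) phi ∘ e).
Proof.
  intros E. apply sol_uniq.
  rewrite (sol_spec b hb e) at 1. rewrite assoc, cp_comp, assoc, E, idr.
  rewrite assoc, cp_sm, idr, idl, <- assoc, <- Hcomp. reflexivity.
Qed.

Lemma jm_alg (Y : Ob C) : jm Y ∘ tinv = tau Y ∘ HM (jm Y).
Proof. rewrite (jm_eq Y) at 1. rewrite <- assoc, (proj2 htinv), idr. reflexivity. Qed.

Lemma jm_uniq {B : Ob C} (b : Hom (HO B) B) (hb : Cia K H b) (g1 g2 : Hom nu B) :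
  g1 ∘ tinv = b ∘ HM g1 -> g2 ∘ tinv = b ∘ HM g2 -> g1 = g2.
Proof.
  intros e1 e2. apply (cia_uniq b hb (cinl K ∘ t)).
  - rewrite assoc, cpl, <- e1, <- assoc, (proj1 htinv), idr. reflexivity.
  - rewrite assoc, cpl, <- e2, <- assoc, (proj1 htinv), idr. reflexivity.
Qed.

Lemma alg_j {Y Y' : Ob C} (phi : Hom (T Y) (T Y')) :
  phi ∘ tau Y = tau Y' ∘ HM phi -> phi ∘ jm Y = jm Y'.
Proof.
  intros E. apply (jm_uniq (tau Y') (ciaT Y')).
  - rewrite <- assoc, jm_alg, assoc, E, <- assoc, <- Hcomp. reflexivity.
  - apply jm_alg.
Qed.

Lemma Tmap_alg {X Y : Ob C} (f : Hom X Y) : Tmap H F f ∘ tau X = tau Y ∘ HM (Tmap H F f).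
Proof. apply ext_alg, ciaT. Qed.
Lemma Tmap_eta {X Y : Ob C} (f : Hom X Y) : Tmap H F f ∘ eta X = eta Y ∘ f.
Proof. apply ext_eta, ciaT. Qed.
Lemma Tmu_alg (Y : Ob C) : Tmu H F Y ∘ tau (T Y) = tau Y ∘ HM (Tmu H F Y).
Proof. apply ext_alg, ciaT. Qed.
Lemma Tmu_eta (Y : Ob C) : Tmu H F Y ∘ eta (T Y) = idm (T Y).
Proof. apply ext_eta, ciaT. Qed.

Definition alphaOf (A : Ob C) (a : Hom (HO A) A) (h : Hom nu A) (hh : h ∘ tinv = a ∘ HM h) :
  Hom (T A) A := proj1_sig (constructive_indefinite_description _ (E_lemma A A a (idm A) h hh)).

Lemma alpha_spec (A : Ob C) (a : Hom (HO A) A) (h : Hom nu A) (hh : h ∘ tinv = a ∘ HM h) :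
  alphaOf A a h hh ∘ tau A = a ∘ HM (alphaOf A a h hh) /\ alphaOf A a h hh ∘ eta A = idm A /\
  alphaOf A a h hh ∘ jm A = h.
Proof. exact (proj2_sig (constructive_indefinite_description _ (E_lemma A A a (idm A) h hh))). Qed.

Lemma EMalg (x : EMObj H F) :
  em_alg H F x ∘ tau (em_car H F x) =
  (em_alg H F x ∘ tau (em_car H F x) ∘ HM (eta (em_car H F x))) ∘ HM (em_alg H F x).
Proof.
  destruct x as [A al un asc]. simpl.
  assert (E1 : Tmu H F A ∘ tau (T A) ∘ HM (eta (T A)) = tau A).
  { rewrite Tmu_alg, <- assoc, <- Hcomp, Tmu_eta, Hid, idr. reflexivity. }
  rewrite <- E1 at 1. rewrite !assoc, asc, (pre (Tmap_alg al)).
  rewrite !assoc, (pre (eq_sym (Hcomp (Tmap H F al) (eta (T A))))), Tmap_eta, Hcomp, assoc.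
  reflexivity.
Qed.

Definition emToSl (x : EMObj H F) : SliceObj H nu tinv.
Proof.
  refine {| sl_car := em_car H F x;
            sl_alg := em_alg H F x ∘ tau (em_car H F x) ∘ HM (eta (em_car H F x));
            sl_map := em_alg H F x ∘ jm (em_car H F x) |}.
  abstract (unfold IsAlgMor; rewrite <- assoc, jm_alg, assoc; rewrite (EMalg x) at 1; rewrite Hcomp, assoc; reflexivity).
Defined.

Definition slToEm (y : SliceObj H nu tinv) : EMObj H F.
Proof.
  destruct y as [A a h hh].
  refine {| em_car := A; em_alg := alphaOf A a h hh |}.
  - abstract (apply alpha_spec).
  - abstract (destruct (alpha_spec A a h hh) as [s1 [s2 s3]];
    apply (U_lemma (T A) A a);
    [ rewrite <- assoc, Tmu_alg, assoc, s1, <- assoc, <- Hcomp; reflexivity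
    | rewrite <- assoc, Tmap_alg, assoc, s1, <- assoc, <- Hcomp; reflexivity
    | rewrite <- assoc, Tmu_eta, idr, <- assoc, Tmap_eta, assoc, s2, idl; reflexivity
    | rewrite <- !assoc, (alg_j _ (Tmu_alg A)), (alg_j _ (Tmap_alg _)); reflexivity ]).
Defined.

Lemma sl_eq (A : Ob C) (a1 a2 : Hom (HO A) A) (h1 h2 : Hom nu A) p1 p2 :
  a1 = a2 -> h1 = h2 -> Build_SliceObj H nu tinv A a1 h1 p1 = Build_SliceObj H nu tinv A a2 h2 p2.
Proof. intros -> ->. f_equal. apply proof_irrelevance. Qed.

Lemma em_eq (A : Ob C) (a1 a2 : Hom (T A) A) p1 p2 q1 q2 :
  a1 = a2 -> Build_EMObj H F A a1 p1 q1 = Build_EMObj H F A a2 p2 q2.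
Proof. intros ->. f_equal; apply proof_irrelevance. Qed.

Lemma em_sl_em (x : EMObj H F) : slToEm (emToSl x) = x.
Proof.
  destruct x as [A al un asc]. unfold emToSl, slToEm. simpl. apply em_eq.
  destruct (alpha_spec A (al ∘ tau A ∘ HM (eta A)) (al ∘ jm A) (emToSl_subproof (Build_EMObj H F A al un asc))) as [s1 [s2 s3]].
  apply (U_lemma A A (al ∘ tau A ∘ HM (eta A))); auto.
  - exact (EMalg (Build_EMObj H F A al un asc)).
  - rewrite s2. auto.
Qed.

Lemma sl_em_sl (y : SliceObj H nu tinv) : emToSl (slToEm y) = y.
Proof.
  destruct y as [A a h hh]. unfold emToSl, slToEm. simpl.
  destruct (alpha_spec A a h hh) as [s1 [s2 s3]]. apply sl_eq; auto.
  rewrite s1, <- assoc, <- Hcomp, s2, Hid, idr. reflexivity.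
Qed.

Lemma em_sl_mor (x y : EMObj H F) (h : Hom (em_car H F x) (em_car H F y)) :
  CM (EMCat H F) h <-> CM (SliceCat H nu tinv) (x := emToSl x) (y := emToSl y) h.
Proof.
  destruct x as [A al un asc]. destruct y as [B be un' asc']. simpl in h. change (Hom A B) in h.
  simpl. unfold IsAlgMor. split.
  - intros E. split.
    + rewrite !assoc, E, (pre (Tmap_alg h)), !assoc, (pre (eq_sym (Hcomp (Tmap H F h) (eta A)))), Tmap_eta.
      rewrite Hcomp, assoc.
      reflexivity.
    + rewrite assoc, E, <- assoc. f_equal. apply alg_j, Tmap_alg.
  - intros [E1 E2].
    pose proof (EMalg (Build_EMObj H F A al un asc)) as EA. simpl in EA.
    pose proof (EMalg (Build_EMObj H F B be un' asc')) as EB. simpl in EB.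
    rewrite !assoc in E1.
    apply (U_lemma A B (be ∘ tau B ∘ HM (eta B))).
    + rewrite <- (assoc h al (tau A)), EA, !assoc, E1, Hcomp, !assoc. reflexivity.
    + rewrite <- (assoc be (Tmap H F h) (tau A)), Tmap_alg, assoc. rewrite EB at 1. rewrite Hcomp, !assoc. reflexivity.
    + rewrite <- !assoc, un, Tmap_eta, assoc, un', idr, idl. reflexivity.
    + rewrite <- !assoc. transitivity (be ∘ jm B).
      * exact E2.
      * f_equal. symmetry. apply alg_j, Tmap_alg.
Qed.

Definition unf {X : Ob C} (e : Hom X (HO X)) : Hom X nu :=
  proj1_sig (constructive_indefinite_description _ (hterm X e)).
Lemma unf_spec {X : Ob C} (e : Hom X (HO X)) : t ∘ unf e = HM (unf e) ∘ e.
Proof. exact (proj1 (proj2_sig (constructive_indefinite_description _ (hterm X e)))). Qed.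
Lemma unf_t : unf t = idm nu.
Proof. apply (term_uniq t); [apply unf_spec| rewrite Hid, idl, idr; reflexivity]. Qed.
Lemma unf_fun {X Y : Ob C} (e : Hom X (HO X)) (f : Hom Y (HO Y)) (h : Hom X Y) :
  f ∘ h = HM h ∘ e -> unf f ∘ h = unf e.
Proof.
  intros E. apply (term_uniq e).
  - rewrite assoc, unf_spec, <- assoc, E, assoc, <- Hcomp. reflexivity.
  - apply unf_spec.
Qed.

Lemma slToBl_sol (x : SliceObj H nu tinv) (X : Ob C) (e : Hom X (HO X)) :
  sl_map H nu tinv x ∘ unf e = sl_alg H nu tinv x ∘ HM (sl_map H nu tinv x ∘ unf e) ∘ e.
Proof.
  destruct x as [A a h hh]. simpl. unfold IsAlgMor in hh.
  transitivity (h ∘ (tinv ∘ t) ∘ unf e); [rewrite (proj1 htinv), idr; reflexivity|].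
  rewrite !assoc, hh, <- (assoc (a ∘ HM h) t (unf e)), unf_spec, Hcomp, !assoc; reflexivity.
Qed.

Definition slToBl (x : SliceObj H nu tinv) : BloomObj H :=
  {| bl_car := sl_car H nu tinv x; bl_alg := sl_alg H nu tinv x;
     bl_dag := fun X e => sl_map H nu tinv x ∘ unf e;
     bl_sol := slToBl_sol x;
     bl_fun := fun X Y e f k E => eq_trans (eq_sym (assoc _ _ _)) (f_equal (comp (sl_map H nu tinv x)) (unf_fun e f k E)) |}.

Definition blToSl (y : BloomObj H) : SliceObj H nu tinv.
Proof.
  refine {| sl_car := bl_car H y; sl_alg := bl_alg H y; sl_map := bl_dag H y nu t |}.
  abstract (unfold IsAlgMor; rewrite (bl_sol H y nu t) at 1; rewrite <- assoc, (proj2 htinv), idr; reflexivity).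
Defined.

Lemma bl_eq (A : Ob C) (a : Hom (HO A) A) d1 d2 p1 p2 q1 q2 :
  (forall X e, d1 X e = d2 X e) -> Build_BloomObj H A a d1 p1 q1 = Build_BloomObj H A a d2 p2 q2.
Proof.
  intros E. assert (d1 = d2) as ->.
  { apply functional_extensionality_dep. intro X. apply functional_extensionality. apply E. }
  f_equal; apply proof_irrelevance.
Qed.

Lemma sl_bl_sl (x : SliceObj H nu tinv) : blToSl (slToBl x) = x.
Proof.
  destruct x as [A a h hh]. unfold blToSl, slToBl. simpl. apply sl_eq; auto.
  rewrite unf_t, idr. reflexivity.
Qed.

Lemma bl_sl_bl (y : BloomObj H) : slToBl (blToSl y) = y.
Proof.
  destruct y as [A a d p q]. unfold blToSl, slToBl. simpl. apply bl_eq.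
  intros X e. apply q. apply unf_spec.
Qed.

Lemma sl_bl_mor (x y : SliceObj H nu tinv) (h : Hom (sl_car H nu tinv x) (sl_car H nu tinv y)) :
  CM (SliceCat H nu tinv) h <-> CM (BloomCat H) (x := slToBl x) (y := slToBl y) h.
Proof.
  destruct x as [A a hA pA]. destruct y as [B b hB pB]. simpl in h. change (Hom A B) in h.
  simpl. split.
  - intros [E1 E2]. split; auto. intros X e. rewrite assoc, E2. reflexivity.
  - intros [E1 E2]. split; auto. specialize (E2 nu t). rewrite unf_t, !idr in E2. exact E2.
Qed.

Lemma bl_sl_mor (x y : BloomObj H) (h : Hom (bl_car H x) (bl_car H y)) :
  CM (BloomCat H) h <-> CM (SliceCat H nu tinv) (x := blToSl x) (y := blToSl y) h.
Proof.
  destruct x as [A a d p q]. destruct y as [B b d' p' q']. simpl in h. change (Hom A B) in h.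
  simpl. split.
  - intros [E1 E2]. split; auto.
  - intros [E1 E2]. split; auto. intros X e.
    rewrite <- (q X nu e t (unf e) (unf_spec e)), <- (q' X nu e t (unf e) (unf_spec e)), assoc, E2.
    reflexivity.
Qed.

Definition sT (A : Ob C) {X : Ob C} (e : Hom X (cp K (HO X) A)) : Hom X (T A) :=
  sol (tau A) (ciaT A) (bullet K H (eta A) e).

Lemma sT_eq (A : Ob C) {X : Ob C} (e : Hom X (cp K (HO X) A)) :
  sT A e = copair K (tau A ∘ HM (sT A e)) (eta A) ∘ e.
Proof. unfold sT at 1. rewrite sol_spec. unfold bullet. csimp. reflexivity. Qed.

Lemma sT_uniq (A : Ob C) {X : Ob C} (e : Hom X (cp K (HO X) A)) (s : Hom X (T A)) :
  s = copair K (tau A ∘ HM s) (eta A) ∘ e -> s = sT A e.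
Proof. intros E. apply sol_uniq. unfold bullet. csimp. exact E. Qed.

Lemma sT_fun (A : Ob C) {X Y : Ob C} (e : Hom X (cp K (HO X) A)) (f : Hom Y (cp K (HO Y) A))
  (k : Hom X Y) : f ∘ k = sum_map K (HM k) (idm A) ∘ e -> sT A f ∘ k = sT A e.
Proof.
  intros E. apply sT_uniq. rewrite (sT_eq A f) at 1. rewrite <- assoc, E. csimp.
  rewrite Hcomp, assoc. reflexivity.
Qed.

Lemma sT_post {A B : Ob C} {X : Ob C} (phi : Hom (T A) B) (b : Hom (HO B) B) (hb : Cia K H b)
  (e : Hom X (cp K (HO X) A)) :
  phi ∘ tau A = b ∘ HM phi ->
  phi ∘ sT A e = sol b hb (sum_map K (idm _) (phi ∘ eta A) ∘ e).
Proof.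
  intros E. unfold sT. rewrite (sol_post (tau A) (ciaT A) b hb phi _ E).
  unfold bullet. rewrite assoc, sm_sm, idl. reflexivity.
Qed.

Lemma alpha_nat (A B : Ob C) (a : Hom (HO A) A) (b : Hom (HO B) B) (hA : Hom nu A) (hB : Hom nu B)
  (pA : hA ∘ tinv = a ∘ HM hA) (pB : hB ∘ tinv = b ∘ HM hB) (h : Hom A B) :
  h ∘ a = b ∘ HM h -> h ∘ hA = hB ->
  h ∘ alphaOf A a hA pA = alphaOf B b hB pB ∘ Tmap H F h.
Proof.
  intros E1 E2.
  destruct (alpha_spec A a hA pA) as [a1 [a2 a3]]. destruct (alpha_spec B b hB pB) as [b1 [b2 b3]].
  apply (U_lemma A B b).
  - rewrite <- assoc, a1, assoc, E1, <- assoc, <- Hcomp. reflexivity.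
  - rewrite <- assoc, Tmap_alg, assoc, b1, <- assoc, <- Hcomp. reflexivity.
  - rewrite <- !assoc, a2, idr, Tmap_eta, assoc, b2, idl. reflexivity.
  - rewrite <- !assoc, a3, E2, (alg_j _ (Tmap_alg h)), b3. reflexivity.
Qed.

Section SlEl.
Variable x : SliceObj H nu tinv.
Let A := sl_car H nu tinv x.
Let a := sl_alg H nu tinv x.
Let hx := sl_map H nu tinv x.
Let px := sl_mor H nu tinv x.
Let al := alphaOf A a hx px.

Lemma slel_sol (X : Ob C) (e : Hom X (cp K (HO X) A)) : IsSolution K H a e (al ∘ sT A e).
Proof.
  destruct (alpha_spec A a hx px) as [a1 [a2 a3]]. fold al in a1, a2, a3.
  apply sol_form. rewrite (sT_eq A e) at 1. csimp. rewrite a1, a2, Hcomp, !assoc. reflexivity.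
Qed.

Lemma slel_fun (X Y : Ob C) (e : Hom X (cp K (HO X) A)) (f : Hom Y (cp K (HO Y) A)) (k : Hom X Y) :
  f ∘ k = sum_map K (HM k) (idm A) ∘ e -> al ∘ sT A f ∘ k = al ∘ sT A e.
Proof. intros E. rewrite <- assoc, (sT_fun A e f k E). reflexivity. Qed.

Lemma slel_comp (X Y : Ob C) (e : Hom X (cp K (HO X) Y)) (f : Hom Y (cp K (HO Y) A)) :
  al ∘ sT A (oplus K H e f) ∘ cinl K = al ∘ sT A (bullet K H (al ∘ sT A f) e).
Proof.
  destruct (alpha_spec A a hx px) as [a1 [a2 a3]]. fold al in a1, a2, a3.
  assert (E_or : oplus K H e f ∘ cinr K = sum_map K (HM (cinr K)) (idm A) ∘ f).
  { pose proof (oplus_inr e f (cinl K) (cinr K)) as O. rewrite cp_id, idl in O. rewrite O.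
    unfold sum_map. rewrite idr. reflexivity. }
  assert (winr : sT A (oplus K H e f) ∘ cinr K = sT A f) by (apply sT_fun; exact E_or).
  pose (g1 := Fext H F Y (T A) (tau A) (sT A f)).
  assert (g1a : g1 ∘ tau Y = tau A ∘ HM g1) by apply ext_alg, ciaT.
  assert (g1e : g1 ∘ eta Y = sT A f) by apply ext_eta, ciaT.
  pose (k1 := Fext H F Y (T A) (tau A) (eta A ∘ (al ∘ sT A f))).
  assert (k1a : k1 ∘ tau Y = tau A ∘ HM k1) by apply ext_alg, ciaT.
  assert (k1e : k1 ∘ eta Y = eta A ∘ (al ∘ sT A f)) by apply ext_eta, ciaT.
  clearbody g1 k1.
  assert (winl : sT A (oplus K H e f) ∘ cinl K = g1 ∘ sT Y e).
  { rewrite (sT_post g1 (tau A) (ciaT A) e g1a), g1e.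
    apply sol_uniq. rewrite (sT_eq A (oplus K H e f)) at 1. rewrite oplus_inl.
    rewrite (pre (eq_sym (Hcomp (sT A (oplus K H e f)) (cinr K)))), winr, <- (sT_eq A f).
    rewrite (pre (eq_sym (Hcomp (sT A (oplus K H e f)) (cinl K)))). csimp. reflexivity. }
  rewrite <- assoc, winl.
  transitivity (al ∘ (k1 ∘ sT Y e)).
  2:{ f_equal. rewrite (sT_post k1 (tau A) (ciaT A) e k1a), k1e.
      unfold sT, bullet. rewrite (assoc (sum_map K (idm _) (eta A))), sm_sm, idl. reflexivity. }
  rewrite !assoc. f_equal.
  apply (U_lemma Y A a).
  - rewrite <- assoc, g1a, assoc, a1, <- assoc, <- Hcomp. reflexivity.
  - rewrite <- assoc, k1a, assoc, a1, <- assoc, <- Hcomp. reflexivity.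
  - rewrite <- !assoc, g1e, k1e, assoc, a2, idl. reflexivity.
  - rewrite <- !assoc, (alg_j g1 g1a), (alg_j k1 k1a). reflexivity.
Qed.

End SlEl.

Definition slToEl (x : SliceObj H nu tinv) : ElgotObj K H :=
  {| el_car := sl_car H nu tinv x; el_alg := sl_alg H nu tinv x;
     el_dag := fun X e => alphaOf (sl_car H nu tinv x) (sl_alg H nu tinv x) (sl_map H nu tinv x)
                            (sl_mor H nu tinv x) ∘ sT (sl_car H nu tinv x) e;
     el_sol := slel_sol x; el_fun := slel_fun x; el_comp := slel_comp x |}.

Lemma elsl_mor (z : ElgotObj K H) :
  IsAlgMor H tinv (el_alg K H z) (el_dag K H z nu (cinl K ∘ t)).
Proof.
  unfold IsAlgMor. pose proof (el_sol K H z nu (cinl K ∘ t)) as S. apply sol_form in S.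
  rewrite S at 1. rewrite assoc, cpl, <- assoc, (proj2 htinv), idr. reflexivity.
Qed.

Definition elToSl (z : ElgotObj K H) : SliceObj H nu tinv :=
  {| sl_car := el_car K H z; sl_alg := el_alg K H z; sl_map := el_dag K H z nu (cinl K ∘ t);
     sl_mor := elsl_mor z |}.

Lemma el_eq (A : Ob C) (a : Hom (HO A) A) d1 d2 p1 p2 q1 q2 r1 r2 :
  (forall X e, d1 X e = d2 X e) ->
  Build_ElgotObj K H A a d1 p1 q1 r1 = Build_ElgotObj K H A a d2 p2 q2 r2.
Proof.
  intros E. assert (d1 = d2) as ->.
  { apply functional_extensionality_dep. intro X. apply functional_extensionality. apply E. }
  f_equal; apply proof_irrelevance.
Qed.

Lemma slToEl_map (x : SliceObj H nu tinv) :
  alphaOf (sl_car H nu tinv x) (sl_alg H nu tinv x) (sl_map H nu tinv x) (sl_mor H nu tinv x)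
    ∘ sT (sl_car H nu tinv x) (cinl K ∘ t) = sl_map H nu tinv x.
Proof.
  assert (E : sT (sl_car H nu tinv x) (cinl K ∘ t) = jm (sl_car H nu tinv x)).
  { symmetry. apply sT_uniq. csimp. apply jm_eq. }
  rewrite E. apply alpha_spec.
Qed.

Lemma el_sl_el (x : SliceObj H nu tinv) : elToSl (slToEl x) = x.
Proof.
  pose proof (slToEl_map x) as E.
  destruct x as [A a h hh]. unfold elToSl, slToEl. simpl in *. apply sl_eq; auto.
Qed.

Lemma sl_el_sl (z : ElgotObj K H) : slToEl (elToSl z) = z.
Proof.
  destruct z as [A a d p q r]. unfold elToSl, slToEl. simpl. apply el_eq. intros X e.
  destruct (proj1 (tau_eta_Bin2 A) (cp K (HO (T A)) A) (cinl K) (cinr K)) as [iinv [i1 i2]].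
  pose proof (p (T A) iinv) as pb. apply sol_form in pb.
  set (be := d (T A) iinv) in *.
  assert (b1 : be ∘ tau A = a ∘ HM be).
  { rewrite pb at 1. rewrite <- assoc, i1, cpl. reflexivity. }
  assert (b2 : be ∘ eta A = idm A).
  { rewrite pb at 1. rewrite <- assoc, i2, cpr. reflexivity. }
  assert (b3 : be ∘ jm A = d nu (cinl K ∘ t)).
  { apply q. rewrite (jm_eq A) at 1. rewrite !assoc, i1. csimp. reflexivity. }

  destruct (alpha_spec A a (d nu (cinl K ∘ t)) (elsl_mor (Build_ElgotObj K H A a d p q r)))
    as [a1 [a2 a3]].
  rewrite (U_lemma A A a _ be a1 b1 (eq_trans a2 (eq_sym b2)) (eq_trans a3 (eq_sym b3))).
  unfold be. apply q. rewrite (sT_eq A e) at 1. csimp. rewrite i1, i2. unfold sum_map. rewrite idr.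
  reflexivity.
Qed.

Lemma el_mor_alg (z w : ElgotObj K H) (h : Hom (el_car K H z) (el_car K H w)) :
  (forall X e, h ∘ el_dag K H z X e = el_dag K H w X (bullet K H h e)) ->
  h ∘ el_alg K H z = el_alg K H w ∘ HM h.
Proof.
  intros E.
  set (A := el_car K H z) in *. set (B := el_car K H w) in *.
  set (e0 := copair K (cinl K ∘ HM (cinr K)) (cinr K) : Hom (cp K (HO A) A) (cp K (HO (cp K (HO A) A)) A)).
  specialize (E _ e0).
  pose proof (el_sol K H z _ e0) as S1. apply sol_form in S1.
  pose proof (el_sol K H w _ (bullet K H h e0)) as S2. apply sol_form in S2.
  set (s := el_dag K H z _ e0) in *. set (s' := el_dag K H w _ (bullet K H h e0)) in *.
  clearbody s s'.
  assert (sr : s ∘ cinr K = idm A).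
  { rewrite S1. unfold e0. csimp. reflexivity. }
  assert (sl : s ∘ cinl K = el_alg K H z).
  { rewrite S1 at 1. unfold e0. csimp. rewrite (pre (eq_sym (Hcomp s (cinr K)))), sr, Hid, idr. reflexivity. }
  assert (s'r : s' ∘ cinr K = h).
  { rewrite S2. unfold e0, bullet. csimp. reflexivity. }
  assert (s'l : s' ∘ cinl K = el_alg K H w ∘ HM h).
  { rewrite S2 at 1. unfold e0, bullet. csimp. rewrite (pre (eq_sym (Hcomp s' (cinr K)))), s'r. reflexivity. }
  rewrite <- sl, assoc, E. exact s'l.
Qed.

Lemma sl_el_mor (x y : SliceObj H nu tinv) (h : Hom (sl_car H nu tinv x) (sl_car H nu tinv y)) :
  CM (SliceCat H nu tinv) h <-> CM (ElgotCat K H) (x := slToEl x) (y := slToEl y) h.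
Proof.
  pose proof (slToEl_map x) as Mx. pose proof (slToEl_map y) as My.
  pose proof (el_mor_alg (slToEl x) (slToEl y) h) as MA.
  destruct x as [A a hA pA]. destruct y as [B b hB pB]. simpl in *. change (Hom A B) in h.
  unfold IsAlgMor. split.
  - intros [E1 E2] X e. rewrite assoc, (alpha_nat A B a b hA hB pA pB h E1 E2), <- assoc. f_equal.
    rewrite (sT_post (Tmap H F h) (tau B) (ciaT B) e (Tmap_alg h)), Tmap_eta.
    unfold sT, bullet. rewrite (assoc (sum_map K (idm _) (eta B))), sm_sm, idl. reflexivity.
  - intros E. split.
    + apply MA. exact E.
    + specialize (E nu (cinl K ∘ t)). simpl in E.
      assert (bt : bullet K H h (cinl K ∘ t) = cinl K ∘ t).
      { unfold bullet. rewrite assoc, sm_l, idr. reflexivity. }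
      rewrite bt in E.
      transitivity (h ∘ (alphaOf A a hA pA ∘ sT A (cinl K ∘ t))); [rewrite Mx; reflexivity|].
      rewrite E. exact My.
Qed.

Ltac mk_iso fo go r1 r2 MOR :=
  exists fo;
  exists (fun x y f => exist _ (proj1_sig f) (proj1 (MOR x y (proj1_sig f)) (proj2_sig f)));
  split; [exists go; split; [exact r1 | exact r2]|];
  split; [intros x y;
          exists (fun g => exist _ (proj1_sig g) (proj2 (MOR x y (proj1_sig g)) (proj2_sig g)));
          split; intros [f pf]; simpl; f_equal; apply proof_irrelevance|];
  split; intros; simpl; auto.

Lemma iso1 : CatIso (EMCat H F) (SliceCat H nu tinv).
Proof. mk_iso emToSl slToEm em_sl_em sl_em_sl em_sl_mor. Qed.

Lemma iso2 : CatIso (SliceCat H nu tinv) (BloomCat H).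
Proof. mk_iso slToBl blToSl sl_bl_sl bl_sl_bl sl_bl_mor. Qed.

Lemma bl_el_mor (x y : BloomObj H) (h : Hom (bl_car H x) (bl_car H y)) :
  CM (BloomCat H) h <-> CM (ElgotCat K H) (x := slToEl (blToSl x)) (y := slToEl (blToSl y)) h.
Proof. exact (iff_trans (bl_sl_mor x y h) (sl_el_mor (blToSl x) (blToSl y) h)). Qed.

Lemma bl_el_bl (y : BloomObj H) : slToBl (elToSl (slToEl (blToSl y))) = y.
Proof. rewrite el_sl_el. apply bl_sl_bl. Qed.
Lemma el_bl_el (z : ElgotObj K H) : slToEl (blToSl (slToBl (elToSl z))) = z.
Proof. rewrite sl_bl_sl. apply sl_el_sl. Qed.

Lemma iso3 : CatIso (BloomCat H) (ElgotCat K H).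
Proof.
  mk_iso (fun y => slToEl (blToSl y)) (fun z => slToBl (elToSl z)) bl_el_bl el_bl_el bl_el_mor.
Qed.

End Term.
End Free.
End Hyper.
End Basics.

Theorem mainTheorem7 (C : Category) (K : BinCoprod C) (H : Functor C C)
  (hC : IsCategory C) (hK : IsBinCoprod K) (hH : IsFunctor H)
  (hext : @HyperExtensive C) (hpres : PreservesCountableCoproducts H)
  (nu : Ob C) (t : Hom nu (fobj H nu)) (hterm : IsTerminalCoalg H t)
  (tinv : Hom (fobj H nu) nu) (htinv : tinv ∘ t = idm nu /\ t ∘ tinv = idm (fobj H nu))
  (F : FreeCiaData H) (hF : IsFreeCia K H F) :
  CatIso (EMCat H F) (SliceCat H nu tinv) /\
  CatIso (SliceCat H nu tinv) (BloomCat H) /\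
  CatIso (BloomCat H) (ElgotCat K H).
Proof.
  split; [|split]; [eapply iso1 | eapply iso2 | eapply iso3]; eassumption.
Qed.
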